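(* A hypergraph $H$ is quasi-eulerian if and only if it admits a decomposition into cycles, i.e., a family of cycles of $H$ such that every edge of $H$ is traversed by exactly one cycle of the family.
   Context: A hypergraph $H=(V,E)$ consists of a finite nonempty vertex set $V$, a finite edge set $E$ disjoint from $V$, and an incidence function assigning to each edge $e\in E$ a subset of $V$ (also denoted $e$); distinct edges may have the same vertex set. Hypergraphs are assumed to have no empty edges. A walk is a sequence $W=v_0e_1v_1e_2\cdots e_kv_k$ with $v_i\in V$, $e_i\in E$, such that for each $i$, $v_{i-1}\ne v_i$ and $v_{i-1},v_i\in e_i$; the $v_i$ are its anchors. $W$ is closed if $k\ge 2$ and $v_0=v_k$; it is a strict trail if $e_1,\dots,e_k$ are pairwise distinct. A cycle is a closed walk $v_0e_1v_1\cdots e_kv_0$ in which $v_0,\dots,v_{k-1}$ are pairwise distinct and $e_1,\dots,e_k$ are pairwise distinct. An Euler family of $H$ is a family of closed strict trails such that every edge of $H$ lies in exactly one trail and no two trails have a common anchor; $H$ is quasi-eulerian if it has one. *)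

(* Defs.v *)
From mathcomp Require Import all_boot.
Set Implicit Arguments. Unset Strict Implicit. Unset Printing Implicit Defensive.

(* A hypergraph is given by finite types V (vertices) and E (edges) together
   with an incidence function inc : E -> {set V}.  Distinct edges may have
   the same vertex set. *)

Section Hyper.
Variables (V E : finType) (inc : E -> {set V}).

(* A walk v0 e1 v1 ... ek vk is represented as (v0, [:: (e1,v1); ...; (ek,vk)]). *)
Definition walk := (V * seq (E * V))%type.

Fixpoint is_walk_from (v : V) (s : seq (E * V)) : bool :=
  match s with
  | [::] => true
  | (e, w) :: s' => [&& v != w, v \in inc e, w \in inc e & is_walk_from w s']
  end.

Definition is_walk (W : walk) : bool := is_walk_from W.1 W.2.

Definition wedges (W : walk) : seq E := map fst W.2.
Definition anchors (W : walk) : seq V := W.1 :: map snd W.2.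

Definition is_closed (W : walk) : bool :=
  [&& is_walk W, 2 <= size W.2 & last W.1 (map snd W.2) == W.1].

Definition is_strict_trail (W : walk) : bool := is_walk W && uniq (wedges W).

Definition is_closed_strict_trail (W : walk) : bool :=
  is_closed W && uniq (wedges W).

Definition is_cycle (W : walk) : bool :=
  [&& is_closed W, uniq (belast W.1 (map snd W.2)) & uniq (wedges W)].

Definition covers_exactly_once (F : seq walk) : Prop :=
  forall e : E, count (fun W => e \in wedges W) F = 1.

Definition euler_family (F : seq walk) : Prop :=
  [/\ all is_closed_strict_trail F,
      covers_exactly_once F &
      pairwise (fun W1 W2 => ~~ has (fun v => v \in anchors W2) (anchors W1)) F].

Definition quasi_eulerian : Prop := exists F : seq walk, euler_family F.

Definition cycle_decomposition (F : seq walk) : Prop :=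
  all is_cycle F /\ covers_exactly_once F.

End Hyper.

(* Main.v *)
Require Import Defs.
From mathcomp Require Import all_boot.
Set Implicit Arguments. Unset Strict Implicit. Unset Printing Implicit Defensive.

Section Proofs.
Variables (V E : finType) (inc : E -> {set V}).

Definition rr (a b : E * V) : bool :=
  [&& a.2 != b.2, a.2 \in inc b.1 & b.2 \in inc b.1].

Lemma walk_path a s : is_walk_from inc a.2 s = path rr a s.
Proof. elim: s a => [//|[e w] s IH] a /=. by rewrite -IH /rr /= !andbA. Qed.

Lemma path_snd a b s : a.2 = b.2 -> path rr a s = path rr b s.
Proof. by case: s => [//|c s] /= H; rewrite /rr H. Qed.

Definition good (s : seq (E * V)) := cycle rr s && (s != [::]).

Definition mkw (v0 : V) (s : seq (E * V)) : walk V E := (last v0 (map snd s), s).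

Lemma cyc_size s : cycle rr s -> s != [::] -> 1 < size s.
Proof. by case: s => [|p [|q s]] //=; rewrite /rr eqxx. Qed.

Lemma closed_mkw v0 s : is_closed inc (mkw v0 s) = good s.
Proof.
case: s => [|p s]; first by rewrite /is_closed /good /=.
rewrite /is_closed /good /mkw /is_walk /= eqxx andbT.
have -> : last p.2 [seq i.2 | i <- s] = (last p s).2 by rewrite (last_map snd).
rewrite -/(is_walk_from inc (last p s).2 (p :: s)) (walk_path (last p s)) andbT.
have Hc : cycle rr (p :: s) = path rr (last p s) (p :: s) by rewrite (cycle_path p).
rewrite -[path rr p (rcons s p)]/(cycle rr (p :: s)) Hc.
case: s Hc => [|q s] Hc; first by rewrite /= /rr eqxx.
by rewrite andbT.
Qed.

Lemma closed_eq v0 W : is_closed inc W -> W = mkw v0 W.2 /\ good W.2.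
Proof.
case: W => v [|p s]; first by rewrite /is_closed /=.
move=> H; have H' := H.
move: H; rewrite /is_closed /= => /and3P [_ _ /eqP Hl].
have E1 : mkw v0 (p :: s) = (v, p :: s) by rewrite /mkw /= Hl.
split; first by rewrite /= E1.
by rewrite -(closed_mkw v0) E1.
Qed.

Lemma mem_anchors v0 s x : s != [::] -> (x \in anchors (mkw v0 s)) = (x \in map snd s).
Proof.
case: s => [//|p s] _; rewrite /anchors /mkw /= in_cons.
case: eqP => // ->; symmetry; exact: mem_last.
Qed.

Lemma cycle_uniq v0 s : s != [::] ->
  uniq (belast (mkw v0 s).1 (map snd (mkw v0 s).2)) = uniq (map snd s).
Proof.
case: s => [//|p s] _; rewrite /mkw /=.
by rewrite -[RHS]/(uniq (p.2 :: map snd s)) [p.2 :: map snd s]lastI rcons_uniq.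
Qed.


Lemma rcons_neq (u : seq (E * V)) p : rcons u p != [::].
Proof. by case: u. Qed.

Lemma cyc_join u1 p u2 q : p.2 = q.2 ->
  cycle rr (rcons u1 p ++ rcons u2 q) = cycle rr (rcons u1 p) && cycle rr (rcons u2 q).
Proof.
move=> Hpq.
rewrite !(cycle_path p) last_cat !last_rcons cat_path last_rcons.
by rewrite (path_snd (rcons u1 p) Hpq) (path_snd (rcons u2 q) Hpq).
Qed.

Lemma rot_to s p : cycle rr s -> p \in s ->
  exists u, perm_eq s (rcons u p) /\ cycle rr (rcons u p).
Proof.
move=> Hc Hp; move: Hc; case/splitPr: Hp => a b Hc.
exists (b ++ a).
have E1 : a ++ p :: b = rcons a p ++ b by rewrite cat_rcons.
have E2 : rot (size (rcons a p)) (rcons a p ++ b) = rcons (b ++ a) p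
  by rewrite rot_size_cat rcons_cat.
rewrite E1 -E2 in Hc *; split; first by rewrite perm_sym perm_rot.
by rewrite rot_cycle.
Qed.

Lemma split_dup (s : seq (E * V)) : ~~ uniq (map snd s) ->
  exists a p b q c, s = a ++ p :: b ++ q :: c /\ p.2 = q.2.
Proof.
elim: s => [//|p s IH] /=; rewrite negb_and negbK.
case/orP.
  move=> /mapP [q Hq Hpq]; case/splitPr: Hq => b c.
  by exists [::], p, b, q, c.
move=> /IH [a [p' [b [q [c [-> H]]]]]].
by exists (p :: a), p', b, q, c.
Qed.

Lemma decomp n s : size s <= n -> good s ->
  exists ss, [/\ all good ss, all (fun t => uniq (map snd t)) ss & perm_eq s (flatten ss)].
Proof.
elim: n s => [|n IH] s Hs Hg.
  by move: Hg; case: s Hs => // _; rewrite /good andbF.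
case Hu: (uniq (map snd s)).
  by exists [:: s]; rewrite /= Hg Hu cats0 perm_refl.
have [a [p [b [q [c [Es Hpq]]]]]] := split_dup (negbT Hu).
set t1 := rcons b q; set t2 := rcons (c ++ a) p.
have Hp : perm_eq s (t1 ++ t2).
  have -> : t1 ++ t2 = rot (size (rcons a p)) (rcons a p ++ (rcons b q ++ c)).
    by rewrite rot_size_cat /t1 /t2 -!catA -!cats1 !catA.
  rewrite perm_sym perm_rot Es -cats1 -!catA /= -cats1 -!catA //.
have Hc : cycle rr (t1 ++ t2).
  have -> : t1 ++ t2 = rot (size (rcons a p)) (rcons a p ++ (rcons b q ++ c)).
    by rewrite rot_size_cat /t1 /t2 -!catA -!cats1 !catA.
  rewrite rot_cycle.
  have <- : s = rcons a p ++ (rcons b q ++ c).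
    by rewrite Es -!cats1 -!catA.
  by case/andP: Hg.
move: Hc; rewrite /t1 /t2 cyc_join; last by rewrite Hpq.
case/andP => H1 H2.
have Sz := perm_size Hp; rewrite size_cat in Sz.
have S1 : size t1 <= n.
  by rewrite -ltnS (leq_trans _ Hs) // Sz -addn1 leq_add2l /t2 size_rcons.
have S2 : size t2 <= n.
  by rewrite -ltnS (leq_trans _ Hs) // Sz -add1n leq_add2r /t1 size_rcons.
have [ss1 [G1 U1 P1]] := IH t1 S1 (introT andP (conj H1 (rcons_neq _ _))).
have [ss2 [G2 U2 P2]] := IH t2 S2 (introT andP (conj H2 (rcons_neq _ _))).
exists (ss1 ++ ss2); rewrite !all_cat G1 G2 U1 U2 flatten_cat; split => //.
by rewrite (perm_trans Hp) // perm_cat.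
Qed.

Definition fl (L : seq (seq (E * V))) := flatten (map (map fst) L).

Lemma fl_map L : fl L = map fst (flatten L).
Proof. by rewrite /fl map_flatten. Qed.

Lemma cover_count v0 L e : all (fun t => uniq (map fst t)) L ->
  count (fun W => e \in wedges W) (map (mkw v0) L) = count_mem e (fl L).
Proof.
elim: L => [//|t L IH] /= /andP [Ut UL].
by rewrite /fl /= count_cat -/(fl L) -IH // count_uniq_mem.
Qed.

Lemma cov_uniq L : (forall e, count_mem e (fl L) = 1) ->
  all (fun t => uniq (map fst t)) L.
Proof.
move=> H; have U : uniq (fl L).
  apply: count_mem_uniq => e; rewrite H; case: (boolP (e \in fl L)) => // /count_memPn.
  by rewrite H.
apply/allP => t Ht; move: U; case/splitPr: Ht => a b.
by rewrite /fl map_cat flatten_cat /= !cat_uniq => /and3P [_ _ /andP [] ].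
Qed.

Definition disj (s t : seq (E * V)) := all (fun v => v \notin map snd t) (map snd s).

Lemma disj_cat d x y : disj d (x ++ y) = disj d x && disj d y.
Proof.
rewrite /disj -all_predI; apply: eq_all => v.
by rewrite /= map_cat mem_cat negb_or.
Qed.

Lemma disj_flat d L : disj d (flatten L) = all (disj d) L.
Proof. by elim: L => [|t L IH] /=; [rewrite /disj; elim: (map snd d) | rewrite disj_cat IH]. Qed.

Lemma disj_perm d x y : perm_eq x y -> disj d x = disj d y.
Proof.
move=> P; apply: eq_all => v /=.
by rewrite (perm_mem (perm_map snd P)).
Qed.

Lemma merge2 s d : good s -> good d -> ~~ disj d s ->
  exists m, good m /\ perm_eq (s ++ d) m.
Proof.
move=> /andP [Cs _] /andP [Cd _] /allPn [v Hv]; rewrite negbK => Hv2.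
case/mapP: Hv => p Hp Ep; case/mapP: Hv2 => q Hq Eq.
have [u2 [P2 C2]] := rot_to Cd Hp.
have [u1 [P1 C1]] := rot_to Cs Hq.
exists (rcons u1 q ++ rcons u2 p); split.
  rewrite /good cyc_join ?C1 ?C2 //=; last by rewrite -Ep -Eq.
  by case: u1 {P1 C1}.
exact: perm_cat.
Qed.

Lemma insert D s : good s -> all good D -> pairwise disj D ->
  exists D', [/\ all good D', pairwise disj D' & perm_eq (s ++ flatten D) (flatten D')].
Proof.
elim: D s => [|d D IH] s Gs.
  by move=> _ _; exists [:: s]; rewrite /= Gs cats0.
move=> /= /andP [Gd GD] /andP [Pd PD].
case Hds: (disj d s).
  have [D0 [G0 P0 Q0]] := IH s Gs GD PD.
  exists (d :: D0); split => /=; first by rewrite Gd G0.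
    rewrite P0 andbT -disj_flat -(disj_perm d Q0) disj_cat Hds disj_flat //.
  by rewrite perm_catCA perm_cat2l.
have [m [Gm Pm]] := merge2 Gs Gd (negbT Hds).
have [D0 [G0 P0 Q0]] := IH m Gm GD PD.
exists D0; split => //.
by rewrite catA (perm_trans _ Q0) // perm_cat2r.
Qed.

Lemma merge_all ss : all good ss ->
  exists D, [/\ all good D, pairwise disj D & perm_eq (flatten ss) (flatten D)].
Proof.
elim: ss => [|s ss IH]; first by exists [::].
move=> /= /andP [Gs /IH [D0 [G0 P0 Q0]]].
have [D [G P Q]] := insert Gs G0 P0.
exists D; split => //.
by rewrite (perm_trans _ Q) // perm_cat2l.
Qed.

Lemma decomp_all L : all good L ->
  exists C, [/\ all good C, all (fun t => uniq (map snd t)) C & perm_eq (flatten L) (flatten C)].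
Proof.
elim: L => [|s L IH]; first by exists [::].
move=> /= /andP [Gs /IH [C0 [G0 U0 Q0]]].
have [ss [G U P]] := decomp (leqnn _) Gs.
exists (ss ++ C0); rewrite !all_cat G G0 U U0 flatten_cat; split => //.
exact: perm_cat.
Qed.

Lemma walks_eq v0 F : all (is_closed inc) F ->
  F = map (mkw v0) (map snd F) /\ all good (map snd F).
Proof.
elim: F => [//|W F IH] /= /andP [/(closed_eq v0) [E1 G1] /IH [E2 G2]].
by rewrite G1 G2 -E1 -E2.
Qed.

Lemma anch_disj v0 s t : good s -> good t ->
  ~~ has (fun v => v \in anchors (mkw v0 t)) (anchors (mkw v0 s)) = disj s t.
Proof.
move=> /andP [_ Ns] /andP [_ Nt].
rewrite -all_predC (eq_all_r (fun x => mem_anchors v0 x Ns)); apply: eq_all => v.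
by rewrite /= (mem_anchors v0 v Nt).
Qed.

Lemma pw_map v0 D : all good D -> pairwise disj D ->
  pairwise (fun W1 W2 => ~~ has (fun v => v \in anchors W2) (anchors W1)) (map (mkw v0) D).
Proof.
elim: D => [//|d D IH] /= /andP [Gd GD] /andP [Pd PD].
rewrite IH // andbT all_map; apply/allP => t Ht /=.
rewrite anch_disj //; last by move/allP: GD; apply.
by move/allP: Pd; apply.
Qed.

Lemma uniq_wedges v0 t : uniq (wedges (mkw v0 t)) = uniq (map fst t).
Proof. by []. Qed.

End Proofs.

Theorem theorem2p41 (V E : finType) (inc : E -> {set V})
  (HV : 0 < #|V|) (HE : forall e : E, inc e != set0) :
  quasi_eulerian inc <-> exists F : seq (walk V E), cycle_decomposition inc F.
Proof.
case/card_gt0P: HV => v0 _.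
split.
  case=> F [HA Hcov _].
  have Hcl : all (is_closed inc) F.
    by apply/allP => W /(allP HA) /andP [].
  have Hun : all (fun W => uniq (wedges W)) F.
    by apply/allP => W /(allP HA) /andP [].
  have [EF GL] := walks_eq v0 Hcl.
  set L := map snd F in EF GL.
  have UL : all (fun t => uniq (map fst t)) L.
    by rewrite all_map; apply: sub_all Hun => W.
  have [C [GC UC PC]] := decomp_all GL.
  have Hc : forall e, count_mem e (fl C) = 1.
    move=> e; rewrite fl_map -(permP (perm_map fst PC)) -fl_map.
    by rewrite -(cover_count v0) // -EF Hcov.
  have UCf := cov_uniq Hc.
  exists (map (mkw v0) C); split.
    rewrite all_map; apply/allP => t Ht /=.
    have Gt := allP GC t Ht.
    rewrite /is_cycle (closed_mkw inc v0) Gt cycle_uniq; last by case/andP: Gt.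
    by rewrite (allP UC t Ht) uniq_wedges (allP UCf t Ht).
  by move=> e; rewrite cover_count.
case=> F [HA Hcov].
have Hcl : all (is_closed inc) F.
  by apply/allP => W /(allP HA) /and3P [].
have Hun : all (fun W => uniq (wedges W)) F.
  by apply/allP => W /(allP HA) /and3P [].
have [EF GL] := walks_eq v0 Hcl.
set L := map snd F in EF GL.
have UL : all (fun t => uniq (map fst t)) L.
  by rewrite all_map; apply: sub_all Hun => W.
have [D [GD PD QD]] := merge_all GL.
have Hc : forall e, count_mem e (fl D) = 1.
  move=> e; rewrite fl_map -(permP (perm_map fst QD)) -fl_map.
  by rewrite -(cover_count v0) // -EF Hcov.
have UDf := cov_uniq Hc.
exists (map (mkw v0) D); split.
- rewrite all_map; apply/allP => t Ht /=.
  by rewrite /is_closed_strict_trail (closed_mkw inc v0) (allP GD t Ht) uniq_wedges (allP UDf t Ht).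
- by move=> e; rewrite cover_count.
- exact: (pw_map v0 GD PD).
Qed.
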